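(* Let $\mathbb F\subseteq\mathbb R$ be a subfield and $X\subseteq\mathbb F^n$ nonempty such that $\operatorname{conv}_{\mathbb R}(X)$ is a polyhedron. Then a nonempty subset $Y\subseteq X$ is a weak $\mathbb F$-face of $X$ if and only if $Y=\mathcal F\cap X$ for some face $\mathcal F$ of $\operatorname{conv}_{\mathbb R}(X)$. Moreover, in this case $\operatorname{conv}_{\mathbb R}(Y)=\mathcal F$.
   Context: For a subfield $\mathbb K\subseteq\mathbb R$ and $X\subseteq\mathbb R^n$: $\operatorname{conv}_{\mathbb K}(X)$ is the set of finite combinations $\sum r_sx_s$ with $x_s\in X$, $r_s\in\mathbb K\cap[0,\infty)$, $\sum r_s=1$; for $Y=\operatorname{conv}_{\mathbb K}(X)$, $\operatorname{relint}_{\mathbb K}(Y)=\{x\in Y:\forall y\in Y\ \exists z\in Y,\ t\in\mathbb K\cap(0,1),\ x=ty+(1-t)z\}$. $Y\subseteq X$ is a weak $\mathbb F$-face of $X$ if for every $U\subseteq X$, $\operatorname{conv}_{\mathbb F}(Y)\cap\operatorname{relint}_{\mathbb F}(\operatorname{conv}_{\mathbb F}(U))\ne\emptyset$ implies $U\subseteq Y$. A polyhedron is a finite intersection of closed affine half-spaces. A face of $\mathcal P\subseteq\mathbb R^n$ is $\mathcal P$ or $\mathcal P\cap H(v,w)$ where $H(v,w)=\{u:v\cdot(u-w)=0\}$, $\mathcal P\subseteq\{u:v\cdot(u-w)\ge0\}$, $\mathcal P\cap H(v,w)\ne\emptyset$. *)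

(* Defs.v *)
From Stdlib Require Import Reals List.
From Stdlib Require Fin.
Open Scope R_scope.

Definition Vec (n : nat) := Fin.t n -> R.

Fixpoint fsum (n : nat) : (Fin.t n -> R) -> R :=
  match n return (Fin.t n -> R) -> R with
  | O => fun _ => 0
  | S m => fun f => f Fin.F1 + fsum m (fun i => f (Fin.FS i))
  end.

Definition dot {n} (v u : Vec n) : R := fsum n (fun i => v i * u i).
Definition vsub {n} (u w : Vec n) : Vec n := fun i => u i - w i.
Definition vadd {n} (u w : Vec n) : Vec n := fun i => u i + w i.
Definition vscale {n} (t : R) (u : Vec n) : Vec n := fun i => t * u i.

Definition is_subfield (K : R -> Prop) : Prop :=
  K 0 /\ K 1 /\
  (forall x y, K x -> K y -> K (x + y)) /\
  (forall x, K x -> K (- x)) /\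
  (forall x y, K x -> K y -> K (x * y)) /\
  (forall x, K x -> x <> 0 -> K (/ x)).

Definition subsetP {n} (A B : Vec n -> Prop) : Prop := forall x, A x -> B x.

Definition coef_sum {n} (l : list (R * Vec n)) : R :=
  fold_right (fun p acc => fst p + acc) 0 l.
Definition lincomb {n} (l : list (R * Vec n)) : Vec n :=
  fold_right (fun p acc => vadd (vscale (fst p) (snd p)) acc) (fun _ => 0) l.

Definition conv {n} (K : R -> Prop) (X : Vec n -> Prop) : Vec n -> Prop :=
  fun u => exists l : list (R * Vec n),
    Forall (fun p => K (fst p) /\ 0 <= fst p /\ X (snd p)) l /\
    coef_sum l = 1 /\ u = lincomb l.

Definition relint {n} (K : R -> Prop) (Y : Vec n -> Prop) : Vec n -> Prop :=
  fun x => Y x /\ forall y, Y y -> exists z t, Y z /\ K t /\ 0 < t < 1 /\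
     x = vadd (vscale t y) (vscale (1 - t) z).

Definition weak_face {n} (F : R -> Prop) (X Y : Vec n -> Prop) : Prop :=
  subsetP Y X /\
  forall U : Vec n -> Prop, subsetP U X ->
    (exists p, conv F Y p /\ relint F (conv F U) p) -> subsetP U Y.

Definition allR : R -> Prop := fun _ => True.

Definition polyhedron {n} (P : Vec n -> Prop) : Prop :=
  exists hs : list (Vec n * R),
    forall u, P u <-> Forall (fun h => dot (fst h) u <= snd h) hs.

Definition face {n} (P F : Vec n -> Prop) : Prop :=
  (forall u, F u <-> P u) \/
  exists v w : Vec n,
    (forall u, P u -> dot v (vsub u w) >= 0) /\
    (exists u, P u /\ dot v (vsub u w) = 0) /\
    (forall u, F u <-> P u /\ dot v (vsub u w) = 0).

(* Main.v *)
Require Import Defs.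
From Stdlib Require Import Reals Lra Lia List Classical FunctionalExtensionality ZArith.
Open Scope R_scope.

Lemma fsum_lin n : forall (f g : Fin.t n -> R) a b,
  fsum n (fun i => a * f i + b * g i) = a * fsum n f + b * fsum n g.
Proof. induction n; intros; simpl. ring. rewrite IHn. ring. Qed.

Lemma fsum_ext n (f g : Fin.t n -> R) : (forall i, f i = g i) -> fsum n f = fsum n g.
Proof. intros H. replace g with f; auto. now apply functional_extensionality. Qed.

Lemma fsum_zero n : fsum n (fun _ => 0) = 0.
Proof. induction n; simpl; [ring| rewrite IHn; ring]. Qed.

Fixpoint sumn (m : nat) (f : nat -> R) : R :=
  match m with O => 0 | S m => f O + sumn m (fun i => f (S i)) end.

Lemma sumn_ext m : forall f g, (forall i, (i < m)%nat -> f i = g i) -> sumn m f = sumn m g.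
Proof. induction m; intros f g H; simpl. auto. rewrite (H 0%nat) by lia.
 rewrite (IHm (fun i => f (S i)) (fun i => g (S i))); auto. intros; apply H; lia. Qed.

Lemma sumn_lin m : forall (f g : nat -> R) a b,
  sumn m (fun i => a * f i + b * g i) = a * sumn m f + b * sumn m g.
Proof. induction m; intros; simpl. ring. rewrite IHm. ring. Qed.

Lemma sumn_plus m f g : sumn m (fun i => f i + g i) = sumn m f + sumn m g.
Proof. rewrite <- (Rmult_1_l (sumn m f)), <- (Rmult_1_l (sumn m g)), <- sumn_lin.
 apply sumn_ext; intros; ring. Qed.

Lemma sumn_scal m f k : sumn m (fun i => k * f i) = k * sumn m f.
Proof. replace (k * sumn m f) with (k * sumn m f + 0 * sumn m f) by ring.
 rewrite <- sumn_lin. apply sumn_ext; intros; ring. Qed.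

Lemma sumn_const m k : sumn m (fun _ => k) = INR m * k.
Proof. induction m; simpl sumn. simpl; ring. rewrite IHm, S_INR. ring. Qed.

Lemma sumn_le m : forall f g, (forall i, (i<m)%nat -> f i <= g i) -> sumn m f <= sumn m g.
Proof. induction m; intros f g H; simpl. lra.
 assert (H0 := H 0%nat ltac:(lia)).
 assert (sumn m (fun i => f (S i)) <= sumn m (fun i => g (S i))) by (apply IHm; intros; apply H; lia). lra. Qed.

Lemma sumn_lt m : forall f g, (forall i, (i<m)%nat -> f i <= g i) ->
  (exists i, (i<m)%nat /\ f i < g i) -> sumn m f < sumn m g.
Proof. induction m; intros f g H [k [Hk Hl]]; simpl. lia.
 destruct k as [|k].
 - assert (sumn m (fun i => f (S i)) <= sumn m (fun i => g (S i))) by (apply sumn_le; intros; apply H; lia). lra.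
 - assert (H0 := H 0%nat ltac:(lia)).
   assert (sumn m (fun i => f (S i)) < sumn m (fun i => g (S i))).
   { apply IHm. intros; apply H; lia. exists k; split; auto; lia. } lra. Qed.

Lemma sumn_nonneg m f : (forall i, (i<m)%nat -> 0 <= f i) -> 0 <= sumn m f.
Proof. intros H. pose proof (sumn_le m (fun _ => 0) f H). rewrite sumn_const in H0. lra. Qed.

Lemma sumn_nonneg_term m : forall f, (forall i, (i<m)%nat -> 0 <= f i) ->
  forall k, (k < m)%nat -> f k <= sumn m f.
Proof. induction m; intros f H k Hk; simpl. lia.
 destruct k as [|k].
 - assert (0 <= sumn m (fun i => f (S i))) by (apply sumn_nonneg; intros; apply H; lia).
   lra.
 - assert (0 <= f 0%nat) by (apply H; lia).
   assert (f (S k) <= sumn m (fun i => f (S i))) by (apply (IHm (fun i => f (S i))); [intros; apply H|]; lia). lra. Qed.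

Lemma sumn_nonneg_zero m : forall f, (forall i, (i<m)%nat -> 0 <= f i) -> sumn m f = 0 ->
  forall k, (k < m)%nat -> f k = 0.
Proof. intros f H Hs k Hk. pose proof (sumn_nonneg_term m f H k Hk). pose proof (H k Hk). lra. Qed.

Lemma sumn_update m : forall f k a, (k < m)%nat ->
  sumn m (fun i => f i + (if Nat.eq_dec i k then a else 0)) = sumn m f + a.
Proof. induction m; intros f k a Hk; simpl. lia.
 destruct k as [|k].
 - simpl. rewrite sumn_plus, (sumn_const m 0). ring.
 - destruct (Nat.eq_dec 0 (S k)); [lia|].
   rewrite (sumn_ext m _ (fun i => f (S i) + (if Nat.eq_dec i k then a else 0))).
   rewrite IHm by lia. ring.
   intros i _. destruct (Nat.eq_dec (S i) (S k)), (Nat.eq_dec i k); try lia; ring. Qed.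

Definition scons {A} (a : A) (f : nat -> A) : nat -> A :=
  fun i => match i with O => a | S i => f i end.

Definition comb {n} (m : nat) (c : nat -> R) (pts : nat -> Vec n) : Vec n :=
  fun j => sumn m (fun i => c i * pts i j).

Lemma fsum_sumn n m : forall (g : nat -> Fin.t n -> R),
  fsum n (fun j => sumn m (fun i => g i j)) = sumn m (fun i => fsum n (fun j => g i j)).
Proof. induction m; intros g; simpl. apply fsum_zero.
 rewrite <- IHm. rewrite <- (Rmult_1_l (fsum n (fun j => g 0%nat j))).
 rewrite <- (Rmult_1_l (fsum n (fun j => sumn m (fun i => g (S i) j)))).
 rewrite <- fsum_lin. apply fsum_ext; intros; ring. Qed.

Lemma dot_comb {n} (a : Vec n) m c pts :
  dot a (comb m c pts) = sumn m (fun i => c i * dot a (pts i)).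
Proof. unfold dot, comb.
 rewrite (fsum_ext _ _ (fun j => sumn m (fun i => c i * (a j * pts i j)))).
 rewrite fsum_sumn. apply sumn_ext; intros i _.
 set (g := fun j => a j * pts i j).
 replace (c i * fsum n g) with (c i * fsum n g + 0 * fsum n g) by ring.
 rewrite <- fsum_lin. apply fsum_ext; intros; unfold g; ring.
 intros j. rewrite <- sumn_scal. apply sumn_ext; intros; ring. Qed.

Lemma dot_lin {n} (a u w : Vec n) s t :
  dot a (fun j => s * u j + t * w j) = s * dot a u + t * dot a w.
Proof. unfold dot. rewrite <- fsum_lin. apply fsum_ext; intros; ring. Qed.

Lemma dot_vsub {n} (a u w : Vec n) : dot a (vsub u w) = dot a u - dot a w.
Proof. unfold vsub. replace (dot a u - dot a w) with (1 * dot a u + (-1) * dot a w) by ring.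
 rewrite <- dot_lin. f_equal. apply functional_extensionality; intros; ring. Qed.

Lemma dot_add_l {n} (a b u : Vec n) : dot (vadd a b) u = dot a u + dot b u.
Proof. unfold dot, vadd. rewrite <- (Rmult_1_l (fsum n (fun i => a i * u i))),
  <- (Rmult_1_l (fsum n (fun i => b i * u i))), <- fsum_lin. apply fsum_ext; intros; ring. Qed.

Lemma dot_scal_l {n} (a u : Vec n) k : dot (vscale k a) u = k * dot a u.
Proof. unfold dot, vscale. replace (k * fsum n (fun i => a i * u i)) with
  (k * fsum n (fun i => a i * u i) + 0 * fsum n (fun i => a i * u i)) by ring.
  rewrite <- fsum_lin. apply fsum_ext; intros; ring. Qed.

Lemma dot_zero_l {n} (u : Vec n) : dot (fun _ => 0) u = 0.
Proof. unfold dot. rewrite (fsum_ext _ _ (fun _ => 0)); [apply fsum_zero| intros; ring]. Qed.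

Fixpoint mk {n} (m : nat) (c : nat -> R) (pts : nat -> Vec n) : list (R * Vec n) :=
  match m with O => nil | S m => (c O, pts O) :: mk m (fun i => c (S i)) (fun i => pts (S i)) end.

Definition dflt {n} : R * Vec n := (0, fun _ => 0).

Lemma coef_sum_nth {n} (l : list (R * Vec n)) :
  coef_sum l = sumn (length l) (fun i => fst (nth i l dflt)).
Proof. induction l; simpl; auto. rewrite IHl. reflexivity. Qed.

Lemma lincomb_nth {n} (l : list (R * Vec n)) :
  lincomb l = comb (length l) (fun i => fst (nth i l dflt)) (fun i => snd (nth i l dflt)).
Proof. induction l; simpl; apply functional_extensionality; intros j; unfold comb; simpl.
 reflexivity. rewrite IHl. unfold vadd, vscale, comb. reflexivity. Qed.

Lemma coef_sum_mk {n} m : forall c (pts : nat -> Vec n), coef_sum (mk m c pts) = sumn m c.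
Proof. induction m; intros; simpl; auto. rewrite IHm; auto. Qed.

Lemma lincomb_mk {n} m : forall c (pts : nat -> Vec n), lincomb (mk m c pts) = comb m c pts.
Proof. induction m; intros; simpl; apply functional_extensionality; intros j; unfold comb; simpl.
 reflexivity. rewrite IHm. unfold vadd, vscale, comb. reflexivity. Qed.

Lemma Forall_mk {n} (P : R * Vec n -> Prop) m : forall c pts,
  (forall i, (i < m)%nat -> P (c i, pts i)) -> Forall P (mk m c pts).
Proof. induction m; intros c pts H; simpl; constructor. apply H; lia.
 apply IHm. intros; apply H; lia. Qed.

Lemma conv_iff {n} K (X : Vec n -> Prop) u : conv K X u <->
  exists m c pts, (forall i, (i < m)%nat -> K (c i) /\ 0 <= c i /\ X (pts i)) /\
     sumn m c = 1 /\ u = comb m c pts.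
Proof. split.
 - intros [l [HF [Hs Hu]]].
   exists (length l), (fun i => fst (nth i l dflt)), (fun i => snd (nth i l dflt)).
   rewrite <- coef_sum_nth, <- lincomb_nth. split; [|split; auto].
   intros k Hi; rewrite Forall_forall in HF; apply (HF _ (nth_In l dflt Hi)).
 - intros [m [c [pts [H [Hs Hu]]]]]. exists (mk m c pts).
   rewrite coef_sum_mk, lincomb_mk. repeat split; auto.
   apply Forall_mk. intros; simpl; apply H; auto.
Qed.

Lemma pos_repr {n} K (X : Vec n -> Prop) m : forall c pts,
  (forall i, (i < m)%nat -> K (c i) /\ 0 <= c i /\ X (pts i)) ->
  exists m' c' pts', (forall i, (i < m')%nat -> K (c' i) /\ 0 < c' i /\ X (pts' i)) /\
     sumn m' c' = sumn m c /\ comb m' c' pts' = comb m c pts.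
Proof. induction m; intros c pts H.
 - exists 0%nat, c, pts. split; auto. intros; lia.
 - destruct (IHm (fun i => c (S i)) (fun i => pts (S i))) as [m' [c' [pts' [H1 [H2 H3]]]]].
   { intros; apply H; lia. }
   destruct (H 0%nat ltac:(lia)) as [HK [Hc HX]].
   destruct (Req_dec_T (c 0%nat) 0) as [E|E].
   + exists m', c', pts'. split; auto. split. simpl; rewrite H2, E; ring.
     rewrite H3. apply functional_extensionality; intros j; unfold comb; simpl. rewrite E. ring.
   + exists (S m'), (scons (c 0%nat) c'), (scons (pts 0%nat) pts'). split.
     * intros [|i] Hi; simpl. repeat split; auto; lra. apply H1; lia.
     * split. simpl. rewrite <- H2. reflexivity.
       apply functional_extensionality; intros j. unfold comb in *; simpl.
       f_equal. exact (f_equal (fun v => v j) H3).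
Qed.

Lemma sf_add F : is_subfield F -> forall x y, F x -> F y -> F (x + y).
Proof. intros (?&?&?&?&?&?); auto. Qed.
Lemma sf_mul F : is_subfield F -> forall x y, F x -> F y -> F (x * y).
Proof. intros (?&?&?&?&?&?); auto. Qed.
Lemma sf_opp F : is_subfield F -> forall x, F x -> F (- x).
Proof. intros (?&?&?&?&?&?); auto. Qed.
Lemma sf_inv F : is_subfield F -> forall x, F x -> x <> 0 -> F (/ x).
Proof. intros (?&?&?&?&?&?); auto. Qed.
Lemma sf_0 F : is_subfield F -> F 0.
Proof. intros (?&?&?&?&?&?); auto. Qed.
Lemma sf_1 F : is_subfield F -> F 1.
Proof. intros (?&?&?&?&?&?); auto. Qed.
Lemma sf_sub F : is_subfield F -> forall x y, F x -> F y -> F (x - y).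
Proof. intros. unfold Rminus. apply sf_add; auto. apply sf_opp; auto. Qed.
Lemma sf_div F : is_subfield F -> forall x y, F x -> F y -> y <> 0 -> F (x / y).
Proof. intros. unfold Rdiv. apply sf_mul; auto. apply sf_inv; auto. Qed.
Lemma sf_INR F : is_subfield F -> forall k, F (INR k).
Proof. intros H; induction k. simpl; apply sf_0; auto. rewrite S_INR. apply sf_add; auto. apply sf_1; auto. Qed.
Lemma sf_IZR F : is_subfield F -> forall z, F (IZR z).
Proof. intros H z. destruct (Z_le_gt_dec 0 z).
 - rewrite <- (Z2Nat.id z) by lia. rewrite <- INR_IZR_INZ. apply sf_INR; auto.
 - replace z with (- (- z))%Z by lia. rewrite opp_IZR. apply sf_opp; auto.
   rewrite <- (Z2Nat.id (-z)) by lia. rewrite <- INR_IZR_INZ. apply sf_INR; auto. Qed.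
Lemma sf_sumn F : is_subfield F -> forall m f, (forall i, (i < m)%nat -> F (f i)) -> F (sumn m f).
Proof. intros H; induction m; intros f Hf; simpl. apply sf_0; auto.
 apply sf_add; auto. apply Hf; lia. apply IHm; intros; apply Hf; lia. Qed.

Lemma density F : is_subfield F -> forall x eps, 0 < eps -> exists r, F r /\ Rabs (r - x) < eps.
Proof. intros HF x eps He.
 destruct (archimed_cor1 eps He) as [N [HN HN0]].
 assert (HNp : 0 < INR N) by (apply lt_0_INR; lia).
 destruct (archimed (x * INR N)) as [H1 H2].
 exists (IZR (up (x * INR N)) / INR N). split.
 - apply sf_div; auto. apply sf_IZR; auto. apply sf_INR; auto. lra.
 - apply Rabs_def1.
   + apply Rle_lt_trans with (/ INR N); auto.
     apply Rmult_le_reg_r with (INR N); auto.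
     replace ((IZR (up (x * INR N)) / INR N - x) * INR N) with (IZR (up (x * INR N)) - x * INR N)
       by (field; lra). rewrite Rinv_l by lra. lra.
   + assert (0 < IZR (up (x * INR N)) / INR N - x); [|lra].
     apply Rmult_lt_reg_r with (INR N); auto.
     replace ((IZR (up (x * INR N)) / INR N - x) * INR N) with (IZR (up (x * INR N)) - x * INR N)
       by (field; lra). lra.
Qed.

Lemma sumn_abs_bound m : forall f x d, 0 <= d -> (forall i, (i < m)%nat -> Rabs (x i) <= d) ->
  Rabs (sumn m (fun i => f i * x i)) <= sumn m (fun i => Rabs (f i)) * d.
Proof. induction m; intros f x d Hd H; simpl. rewrite Rabs_R0; lra.
 eapply Rle_trans. apply Rabs_triang. rewrite Rmult_plus_distr_r.
 apply Rplus_le_compat. rewrite Rabs_mult. apply Rmult_le_compat_l. apply Rabs_pos. apply H; lia.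
 apply (IHm (fun i => f (S i)) (fun i => x (S i))); auto. intros; apply H; lia. Qed.

Definition Eqn := ((nat -> R) * R)%type.

Lemma approx F : is_subfield F -> forall m (E : Eqn -> Prop),
  (forall e, E e -> (forall i, (i < m)%nat -> F (fst e i)) /\ F (snd e)) ->
  forall lam, (forall e, E e -> sumn m (fun i => fst e i * lam i) = snd e) ->
  forall eps, 0 < eps -> exists mu, (forall i, (i < m)%nat -> F (mu i)) /\
    (forall e, E e -> sumn m (fun i => fst e i * mu i) = snd e) /\
    (forall i, (i < m)%nat -> Rabs (mu i - lam i) < eps).
Proof. intros HF. induction m; intros E HE lam Hl eps Heps.
 - exists lam. split; [intros; lia|]. split; auto. intros; lia.
 - destruct (classic (exists e0, E e0 /\ fst e0 0%nat <> 0)) as [[e0 [HE0 Ha]]|Hno].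
   + set (c0 := fst e0). set (d0 := snd e0). set (a := c0 0%nat).
     set (E' := fun e' : Eqn => exists e, E e /\ e' =
        ((fun i => fst e (S i) - fst e 0%nat * c0 (S i) / a), snd e - fst e 0%nat * d0 / a)).
     set (S0 := sumn m (fun i => Rabs (c0 (S i)))).
     assert (HS0 : 0 <= S0) by (apply sumn_nonneg; intros; apply Rabs_pos).
     assert (Hapos : 0 < Rabs a) by (apply Rabs_pos_lt; auto).
     set (dl := Rmin eps (eps * Rabs a / (1 + S0))).
     assert (Hdl : 0 < dl).
     { unfold dl. apply Rmin_case; auto. apply Rdiv_lt_0_compat; [apply Rmult_lt_0_compat|]; lra. }
     destruct (HE e0 HE0) as [Hc0F Hd0F].
     destruct (IHm E') with (lam := fun i => lam (S i)) (eps := dl) as [mu' [Hm1 [Hm2 Hm3]]]; auto.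
     { intros e' [e [He ->]]. destruct (HE e He) as [H1 H2]. simpl. split.
       - intros i Hi. apply sf_sub; auto. apply H1; lia. apply sf_div; auto. apply sf_mul; auto.
         apply H1; lia. apply Hc0F; lia. apply Hc0F; lia.
       - apply sf_sub; auto. apply sf_div; auto. apply sf_mul; auto. apply H1; lia. apply Hc0F; lia. }
     { intros e' [e [He ->]]. simpl. pose proof (Hl e He) as H1. pose proof (Hl e0 HE0) as H2.
       simpl in H1, H2. fold c0 d0 a in H2.
       rewrite (sumn_ext m _ (fun i => 1 * (fst e (S i) * lam (S i)) + (- (fst e 0%nat / a)) * (c0 (S i) * lam (S i)))).
       rewrite sumn_lin. apply Rmult_eq_reg_l with a; auto. 
       replace (sumn m (fun i => fst e (S i) * lam (S i))) with (snd e - fst e 0%nat * lam 0%nat) by lra.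
       replace (sumn m (fun i => c0 (S i) * lam (S i))) with (d0 - a * lam 0%nat) by lra.
       field; auto.
       intros; field; auto. }
     exists (scons ((d0 - sumn m (fun i => c0 (S i) * mu' i)) / a) mu'). split; [|split].
     * assert (HaF : F a) by (apply Hc0F; lia).
       intros [|i] Hi; simpl.
       -- apply sf_div; [exact HF| apply sf_sub; [exact HF| exact Hd0F| apply sf_sumn; [exact HF| intros k Hk; apply sf_mul; [exact HF|apply Hc0F; lia|apply Hm1; lia]]] | exact HaF | exact Ha].
       -- apply Hm1; lia.
     * intros e He. simpl. pose proof (Hm2 _ (ex_intro _ e (conj He eq_refl))) as H1. simpl in H1.
       rewrite (sumn_ext m _ (fun i => 1 * (fst e (S i) * mu' i) + (- (fst e 0%nat / a)) * (c0 (S i) * mu' i))) in H1.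
       rewrite sumn_lin in H1.
       replace (sumn m (fun i => fst e (S i) * mu' i)) with
         (snd e - fst e 0%nat * d0 / a + fst e 0%nat / a * sumn m (fun i => c0 (S i) * mu' i)) by lra.
       field; auto.
       intros; field; auto.
     * intros [|i] Hi; simpl.
       -- pose proof (Hl e0 HE0) as H2. simpl in H2. fold c0 d0 a in H2.
          replace ((d0 - sumn m (fun i => c0 (S i) * mu' i)) / a - lam 0%nat) with
            (- (sumn m (fun i => c0 (S i) * (mu' i - lam (S i)))) / a).
          2:{ rewrite (sumn_ext m _ (fun i => 1 * (c0 (S i) * mu' i) + (-1) * (c0 (S i) * lam (S i)))).
              rewrite sumn_lin. apply Rmult_eq_reg_l with a; auto. field_simplify; auto. lra.
              intros; ring. }
          unfold Rdiv. rewrite Rabs_mult, Rabs_Ropp, Rabs_inv.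
          assert (Hb : Rabs (sumn m (fun i => c0 (S i) * (mu' i - lam (S i)))) <= S0 * dl).
          { apply sumn_abs_bound. lra. intros; left; apply Hm3; auto. }
          assert (Hdl2 : dl <= eps * Rabs a / (1 + S0)) by apply Rmin_r.
          apply Rmult_lt_reg_r with (Rabs a); auto.
          rewrite Rmult_assoc, Rinv_l by lra. rewrite Rmult_1_r.
          apply Rle_lt_trans with (S0 * dl); auto.
          apply Rle_lt_trans with (S0 * (eps * Rabs a / (1 + S0))).
          apply Rmult_le_compat_l; auto.
          apply Rmult_lt_reg_r with (1 + S0). lra.
          replace (S0 * (eps * Rabs a / (1 + S0)) * (1 + S0)) with (S0 * (eps * Rabs a)) by (field; lra).
          assert (0 < eps * Rabs a) by (apply Rmult_lt_0_compat; lra). nra.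
       -- apply Rlt_le_trans with dl. apply Hm3; lia. apply Rmin_l.
   + assert (Hz : forall e, E e -> fst e 0%nat = 0).
     { intros e He. apply NNPP. intros Hn. apply Hno. exists e; auto. }
     set (E' := fun e' : Eqn => exists e, E e /\ e' = ((fun i => fst e (S i)), snd e)).
     destruct (IHm E') with (lam := fun i => lam (S i)) (eps := eps) as [mu' [Hm1 [Hm2 Hm3]]]; auto.
     { intros e' [e [He ->]]. destruct (HE e He) as [H1 H2]. simpl. split; auto.
       intros i Hi; apply H1; lia. }
     { intros e' [e [He ->]]. simpl. pose proof (Hl e He) as H1. simpl in H1. rewrite Hz in H1; auto. lra. }
     destruct (density F HF (lam 0%nat) eps Heps) as [r [Hr Hr2]].
     exists (scons r mu'). split; [|split].
     * intros [|i] Hi; simpl; auto. apply Hm1; lia.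
     * intros e He. simpl. rewrite Hz by auto.
       pose proof (Hm2 _ (ex_intro _ e (conj He eq_refl))) as H1. simpl in H1. lra.
     * intros [|i] Hi; simpl; auto. apply Hm3; lia.
Qed.

Lemma min_pos (P : R -> Prop) m : forall c, P 1 -> (forall i, (i < m)%nat -> P (c i) /\ 0 < c i) ->
  exists e, P e /\ 0 < e /\ e <= 1 /\ forall i, (i < m)%nat -> e <= c i.
Proof. induction m; intros c H1 H.
 - exists 1. repeat split; auto; try lra. intros; lia.
 - destruct (IHm (fun i => c (S i)) H1) as [e [He1 [He2 [He3 He4]]]]. intros; apply H; lia.
   destruct (H 0%nat ltac:(lia)) as [Hc1 Hc2].
   exists (Rmin e (c 0%nat)). split. apply Rmin_case; auto.
   split. apply Rmin_case; lra. split. eapply Rle_trans. apply Rmin_l. auto.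
   intros [|i] Hi. apply Rmin_r. eapply Rle_trans. apply Rmin_l. apply He4; lia.
Qed.

Lemma reprF F : is_subfield F -> forall n m c (pts : nat -> Vec n) q,
  (forall i, (i < m)%nat -> 0 < c i) -> sumn m c = 1 -> comb m c pts = q ->
  (forall i, (i < m)%nat -> forall j, F (pts i j)) -> (forall j, F (q j)) ->
  exists c', (forall i, (i < m)%nat -> F (c' i) /\ 0 < c' i) /\ sumn m c' = 1 /\ comb m c' pts = q.
Proof. intros HF n m c pts q Hc Hs Hq Hp HqF.
 set (E := fun e : Eqn => (exists j, e = ((fun i => pts i j), q j)) \/ e = ((fun _ => 1), 1)).
 assert (Hmp : forall i, (i < m)%nat -> True /\ 0 < c i) by (intros; split; auto).
 destruct (min_pos (fun _ => True) m c I Hmp) as [eps [_ [He [_ He']]]].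
 destruct (approx F HF m E) with (lam := c) (eps := eps) as [mu [H1 [H2 H3]]]; auto.
 - intros e [[j ->]| ->]; simpl; split; auto; intros; apply sf_1; auto.
 - intros e [[j ->]| ->]; simpl.
   + rewrite <- Hq. unfold comb. apply sumn_ext; intros; ring.
   + transitivity (sumn m c); [apply sumn_ext; intros; ring| auto].
 - exists mu. split; [|split].
   + intros i Hi. split; auto. pose proof (He' i Hi). pose proof (H3 i Hi).
     apply Rabs_def2 in H0. lra.
   + transitivity (sumn m (fun i => 1 * mu i)). apply sumn_ext; intros; ring.
     apply (H2 (fun _ => 1, 1)). right; auto.
   + apply functional_extensionality; intros j. unfold comb.
     transitivity (sumn m (fun i => pts i j * mu i)). apply sumn_ext; intros; ring.
     apply (H2 ((fun i => pts i j), q j)). left; exists j; auto.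
Qed.

Lemma regroup F : is_subfield F -> forall n m (pts : nat -> Vec n) k d w,
  (forall j, (j < k)%nat -> F (d j) /\ 0 <= d j /\ exists i, (i < m)%nat /\ w j = pts i) ->
  exists nu, (forall i, F (nu i) /\ 0 <= nu i) /\ sumn m nu = sumn k d /\ comb k d w = comb m nu pts.
Proof. intros HF n m pts. induction k; intros d w H.
 - exists (fun _ => 0). split. intros; split; [apply sf_0; auto| lra].
   split. rewrite sumn_const; simpl; ring.
   apply functional_extensionality; intros j; unfold comb; simpl. rewrite (sumn_ext m _ (fun _ => 0)).
   rewrite sumn_const; ring. intros; ring.
 - destruct (IHk (fun j => d (S j)) (fun j => w (S j))) as [nu [H1 [H2 H3]]].
   { intros; apply H; lia. }
   destruct (H 0%nat ltac:(lia)) as [Hd1 [Hd2 [i0 [Hi0 Hw]]]].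
   exists (fun i => nu i + (if Nat.eq_dec i i0 then d 0%nat else 0)). split; [|split].
   + intros i. destruct (H1 i). destruct (Nat.eq_dec i i0); split; try lra.
     apply sf_add; auto. apply sf_add; auto. apply sf_0; auto.
   + rewrite sumn_update by auto. rewrite H2. simpl. ring.
   + apply functional_extensionality; intros j. unfold comb. simpl.
     rewrite (sumn_ext m _ (fun i => nu i * pts i j + (if Nat.eq_dec i i0 then d 0%nat * pts i0 j else 0))).
     rewrite sumn_update by auto. rewrite Hw.
     pose proof (f_equal (fun v => v j) H3) as H4. unfold comb in H4. simpl in H4. rewrite H4. ring.
     intros i _. destruct (Nat.eq_dec i i0); subst; ring.
Qed.

Lemma relint_lemma F : is_subfield F -> forall n m c (pts : nat -> Vec n),
  (forall i, (i < m)%nat -> F (c i) /\ 0 < c i) -> sumn m c = 1 ->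
  relint F (conv F (fun u => exists i, (i < m)%nat /\ u = pts i)) (comb m c pts).
Proof. intros HF n m c pts Hc Hs. split.
 - apply conv_iff. exists m, c, pts. split; auto. intros i Hi. destruct (Hc i Hi).
   repeat split; auto; try lra. exists i; auto.
 - intros y Hy. apply conv_iff in Hy. destruct Hy as [k [d [w [Hw [Hd Hy]]]]].
   destruct (regroup F HF n m pts k d w) as [nu [Hn1 [Hn2 Hn3]]].
   { intros j Hj. destruct (Hw j Hj) as [? [? [i [? ?]]]]. repeat split; auto. exists i; auto. }
   rewrite Hd in Hn2. rewrite Hn3 in Hy. clear Hn3 Hd Hw d w k.
   assert (Hnu1 : forall i, (i < m)%nat -> nu i <= 1).
   { intros i Hi. rewrite <- Hn2. apply sumn_nonneg_term; auto. intros; apply Hn1. }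
   destruct (min_pos F m c (sf_1 F HF) Hc) as [e [He1 [He2 [He3 He4]]]].
   set (t := e / 2).
   assert (Ht : F t) by (apply sf_div; [exact HF|exact He1|apply sf_IZR; exact HF|lra]).
   assert (Ht1 : 0 < t < 1) by (unfold t; lra).
   exists (comb m (fun i => (c i - t * nu i) / (1 - t)) pts), t.
   split; [|split; [auto|split; [auto|]]].
   + apply conv_iff. exists m, (fun i => (c i - t * nu i) / (1 - t)), pts. split; [|split; auto].
     * intros i Hi. destruct (Hc i Hi). destruct (Hn1 i). pose proof (Hnu1 i Hi). pose proof (He4 i Hi).
       split; [|split].
       -- apply sf_div; auto. apply sf_sub; auto. apply sf_mul; auto. apply sf_sub; auto. apply sf_1; auto. lra.
       -- apply Rle_mult_inv_pos; [|lra]. assert (t * nu i <= t) by nra. unfold t in *. lra.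
       -- exists i; auto.
     * rewrite (sumn_ext m _ (fun i => (/ (1 - t)) * c i + (- t / (1 - t)) * nu i)).
       rewrite sumn_lin, Hs, Hn2. field. lra. intros; field; lra.
   + apply functional_extensionality; intros j. rewrite Hy. unfold vadd, vscale, comb.
     rewrite (sumn_ext m (fun i => (c i - t * nu i) / (1 - t) * pts i j)
       (fun i => (/ (1 - t)) * (c i * pts i j) + (- t / (1 - t)) * (nu i * pts i j))).
     rewrite sumn_lin. field. lra. intros; field; lra.
Qed.

Lemma X_in_conv {n} K (X : Vec n -> Prop) x : K 1 -> X x -> conv K X x.
Proof. intros HK Hx. apply conv_iff. exists 1%nat, (fun _ => 1), (fun _ => x).
 split. intros i Hi; repeat split; auto; lra. split. simpl; ring.
 apply functional_extensionality; intros j; unfold comb; simpl; ring. Qed.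

Lemma conv_mono {n} K (A B : Vec n -> Prop) u : (forall v, A v -> B v) -> conv K A u -> conv K B u.
Proof. intros H [l [HF Hl]]. exists l. split; auto. eapply Forall_impl; [|exact HF].
 intros [a b]; simpl; intros (?&?&?); auto. Qed.

Lemma conv_K_R {n} K (A : Vec n -> Prop) u : conv K A u -> conv allR A u.
Proof. intros [l [HF Hl]]. exists l. split; auto. eapply Forall_impl; [|exact HF].
 intros [a b]; simpl; intros (?&?&?); unfold allR; auto. Qed.

Lemma conv_ext {n} K (A B : Vec n -> Prop) u : (forall v, A v <-> B v) -> (conv K A u <-> conv K B u).
Proof. intros H; split; apply conv_mono; firstorder. Qed.

Lemma aff_comb {n} (v w : Vec n) m c pts : sumn m c = 1 ->
  dot v (vsub (comb m c pts) w) = sumn m (fun i => c i * dot v (vsub (pts i) w)).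
Proof. intros Hs. rewrite dot_vsub, dot_comb.
 rewrite (sumn_ext m (fun i => c i * dot v (vsub (pts i) w)) (fun i => 1 * (c i * dot v (pts i)) + (- dot v w) * c i)).
 rewrite sumn_lin, Hs. ring. intros; rewrite dot_vsub; ring. Qed.

Lemma moreover n (X Y Fc : Vec n -> Prop) y0 : Y y0 -> face (conv allR X) Fc ->
  (forall u, Y u <-> Fc u /\ X u) -> forall u, conv allR Y u <-> Fc u.
Proof. intros Hy0 Hf HY u. destruct Hf as [Hf|[v [w [H1 [H2 H3]]]]].
 - assert (HYX : forall u, Y u <-> X u).
   { intros z; rewrite HY; split; [tauto|]. intros Hz; split; auto. apply Hf. apply X_in_conv; auto; exact I. }
   rewrite (conv_ext _ _ _ _ HYX). rewrite Hf. tauto.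
 - split.
   + intros Hu. apply conv_iff in Hu as Hu'. destruct Hu' as [m [c [pts [Hp [Hs ->]]]]].
     apply H3. split.
     * apply conv_mono with Y; auto. intros z Hz; apply HY; auto.
     * rewrite aff_comb by auto. rewrite (sumn_ext m _ (fun _ => 0)). rewrite sumn_const; ring.
       intros i Hi. destruct (Hp i Hi) as (_&_&HYp). apply HY in HYp.
       destruct HYp as [HFc _]. apply H3 in HFc. rewrite (proj2 HFc). ring.
   + intros Hu. apply H3 in Hu. destruct Hu as [HP Hz].
     apply conv_iff in HP as HP'. destruct HP' as [m [c [pts [Hp [Hs Hu]]]]].
     rewrite Hu, aff_comb in Hz by auto.
     assert (Hnn : forall i, (i < m)%nat -> 0 <= c i * dot v (vsub (pts i) w)).
     { intros i Hi. destruct (Hp i Hi) as (_&Hc&HX). apply Rmult_le_pos; auto.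
       apply Rge_le. apply H1. apply X_in_conv; auto. exact I. }
     pose proof (sumn_nonneg_zero m _ Hnn Hz) as Hz0.
     apply conv_iff. exists m, c, (fun i => if Req_dec_T (c i) 0 then y0 else pts i).
     split; [|split; auto].
     * intros i Hi. destruct (Hp i Hi) as (Hk&Hc&HX). split; auto. split; auto.
       destruct (Req_dec_T (c i) 0) as [E|E]; auto.
       apply HY. split; auto. apply H3. split. apply X_in_conv; auto; exact I.
       pose proof (Hz0 i Hi). apply Rmult_integral in H. destruct H; auto. contradiction.
     * rewrite Hu. apply functional_extensionality; intros j. unfold comb. apply sumn_ext.
       intros i _. destruct (Req_dec_T (c i) 0) as [E|E]; auto. rewrite E; ring.
Qed.

Lemma backward F n (X Y Fc : Vec n -> Prop) : is_subfield F -> face (conv allR X) Fc ->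
  (forall u, Y u <-> Fc u /\ X u) -> weak_face F X Y.
Proof. intros HF Hf HY. split. intros u Hu; apply HY; auto.
 intros U HUX [p [Hp1 [_ Hp2]]] u Hu.
 destruct Hf as [Hf|[v [w [H1 [H2 H3]]]]].
 - apply HY. split; auto. apply Hf. apply X_in_conv; auto. exact I.
 - destruct (Hp2 u (X_in_conv F U u (sf_1 F HF) Hu)) as [z [t [Hz [_ [Ht Hpe]]]]].
   assert (Hfp : dot v (vsub p w) = 0).
   { apply conv_iff in Hp1. destruct Hp1 as [m [c [pts [Hp [Hs ->]]]]].
     rewrite aff_comb by auto. rewrite (sumn_ext m _ (fun _ => 0)). rewrite sumn_const; ring.
     intros i Hi. destruct (Hp i Hi) as (_&_&HYp). apply HY in HYp. destruct HYp as [HFc _].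
     apply H3 in HFc. rewrite (proj2 HFc). ring. }
   assert (Hfz : dot v (vsub z w) >= 0).
   { apply H1. apply conv_mono with U; auto. eapply conv_K_R; eauto. }
   assert (Hfu : dot v (vsub u w) >= 0).
   { apply H1. apply X_in_conv; auto. exact I. }
   assert (Hlin : dot v (vsub p w) = t * dot v (vsub u w) + (1 - t) * dot v (vsub z w)).
   { rewrite !dot_vsub, Hpe. unfold vadd, vscale. rewrite dot_lin. ring. }
   apply HY. split; auto. apply H3. split. apply X_in_conv; auto. exact I. nra.
Qed.

Lemma face_vec {n} (P : Vec n -> Prop) (T : Vec n * R -> Prop) (y0 : Vec n) hs :
  (forall h, In h hs -> forall u, P u -> dot (fst h) u <= snd h) ->
  (forall h, In h hs -> T h -> dot (fst h) y0 = snd h) ->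
  exists v, forall u, P u -> 0 <= dot v (vsub u y0) /\
     (dot v (vsub u y0) = 0 <-> forall h, In h hs -> T h -> dot (fst h) u = snd h).
Proof. induction hs as [|h hs IH]; intros H1 H2.
 - exists (fun _ => 0). intros u _. rewrite dot_zero_l. split. lra. split; auto. intros _ h [].
 - destruct IH as [v Hv]. intros; apply H1; simpl; auto. intros; apply H2; simpl; auto.
   destruct (classic (T h)) as [Th|Th].
   + exists (vadd v (vscale (-1) (fst h))). intros u Pu. destruct (Hv u Pu) as [Hv1 Hv2].
     assert (E : dot (vadd v (vscale (-1) (fst h))) (vsub u y0) = dot v (vsub u y0) + (snd h - dot (fst h) u)).
     { rewrite dot_add_l, dot_scal_l, (dot_vsub (fst h)), (H2 h); simpl; auto. ring. }
     assert (Hh : dot (fst h) u <= snd h) by (apply H1; simpl; auto).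
     rewrite E. split. lra. split.
     * intros Hz h' [<-|Hin] Th'. lra. apply Hv2; auto. lra.
     * intros Hall. assert (dot (fst h) u = snd h) by (apply Hall; simpl; auto).
       assert (dot v (vsub u y0) = 0) by (apply Hv2; intros; apply Hall; simpl; auto). lra.
   + exists v. intros u Pu. destruct (Hv u Pu) as [Hv1 Hv2]. split; auto. split.
     * intros Hz h' [<-|Hin] Th'. contradiction. apply Hv2; auto.
     * intros Hall. apply Hv2. intros; apply Hall; simpl; auto.
Qed.

Lemma ys_exist {n} (Y : Vec n -> Prop) (Q : Vec n * R -> Prop) y0 hs : Y y0 ->
  (forall h, In h hs -> Q h -> exists y, Y y /\ dot (fst h) y < snd h) ->
  exists m pts, (0 < m)%nat /\ (forall i, (i < m)%nat -> Y (pts i)) /\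
    forall h, In h hs -> Q h -> exists i, (i < m)%nat /\ dot (fst h) (pts i) < snd h.
Proof. intros Hy0. induction hs as [|h hs IH]; intros H.
 - exists 1%nat, (fun _ => y0). split; auto. split; auto. intros _ [].
 - destruct IH as [m [pts [Hm [HY Hh]]]]. intros; apply H; simpl; auto.
   destruct (classic (Q h)) as [Qh|Qh].
   + destruct (H h (or_introl eq_refl) Qh) as [y [Hy Hyl]].
     exists (S m), (scons y pts). split. lia. split.
     * intros [|i] Hi; simpl; auto. apply HY; lia.
     * intros h' [<-|Hin] Qh'. exists 0%nat; split; auto; lia.
       destruct (Hh h' Hin Qh') as [i [Hi Hl]]. exists (S i); split; auto; lia.
   + exists m, pts. split; auto. split; auto. intros h' [<-|Hin] Qh'. contradiction. auto.
Qed.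

Lemma N_exist {n} (Q : Vec n * R -> Prop) (p x : Vec n) hs :
  (forall h, In h hs -> Q h -> dot (fst h) p < snd h) ->
  exists N, forall h, In h hs -> Q h ->
    dot (fst h) p - dot (fst h) x < (snd h - dot (fst h) p) * INR (S N).
Proof. induction hs as [|h hs IH]; intros H.
 - exists 0%nat. intros _ [].
 - destruct IH as [N1 HN1]. intros; apply H; simpl; auto.
   assert (Hmono : forall h' N N', (N <= N')%nat -> Q h' -> In h' (h :: hs) ->
      dot (fst h') p - dot (fst h') x < (snd h' - dot (fst h') p) * INR (S N) ->
      dot (fst h') p - dot (fst h') x < (snd h' - dot (fst h') p) * INR (S N')).
   { intros h' N N' HN Qh' Hin Hl. pose proof (H h' Hin Qh').
     assert (INR (S N) <= INR (S N')) by (apply le_INR; lia).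
     assert ((snd h' - dot (fst h') p) * INR (S N) <= (snd h' - dot (fst h') p) * INR (S N'))
       by (apply Rmult_le_compat_l; lra). lra. }
   destruct (classic (Q h)) as [Qh|Qh].
   + pose proof (H h (or_introl eq_refl) Qh) as Hd.
     set (D := dot (fst h) p - dot (fst h) x). set (dl := snd h - dot (fst h) p).
     assert (Hdl : 0 < dl) by (unfold dl; lra).
     assert (HN2 : exists N2, D < dl * INR (S N2)).
     { destruct (Rle_lt_dec D 0) as [HD|HD].
       - exists 0%nat. simpl. lra.
       - destruct (archimed_cor1 (dl / D)) as [N [HN HN0]]. apply Rdiv_lt_0_compat; auto.
         exists N. assert (HNp : 0 < INR N) by (apply lt_0_INR; lia).
         assert (INR N <= INR (S N)) by (apply le_INR; lia).
         assert (D < dl * INR N).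
         { apply Rmult_lt_reg_r with (/ D * / INR N).
           apply Rmult_lt_0_compat; apply Rinv_0_lt_compat; auto.
           replace (D * (/ D * / INR N)) with (/ INR N) by (field; lra).
           replace (dl * INR N * (/ D * / INR N)) with (dl / D) by (field; lra). auto. }
         nra. }
     destruct HN2 as [N2 HN2].
     exists (Nat.max N1 N2). intros h' [<-|Hin] Qh'.
     * apply Hmono with N2; simpl; auto. lia.
     * apply Hmono with N1; simpl; auto. lia.
   + exists N1. intros h' [<-|Hin] Qh'. contradiction. auto.
Qed.

Lemma hard F n (X Y : Vec n -> Prop) hs y0 x :
  is_subfield F -> (forall x, X x -> forall i, F (x i)) ->
  (forall u, conv allR X u <-> Forall (fun h => dot (fst h) u <= snd h) hs) ->
  Y y0 -> subsetP Y X -> weak_face F X Y ->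
  X x -> (forall h, In h hs -> (forall y, Y y -> dot (fst h) y = snd h) -> dot (fst h) x = snd h) ->
  Y x.
Proof. intros HF HXF Hhs Hy0 HYX HW Hx Hxt.
 set (tight := fun h : Vec n * R => forall y, Y y -> dot (fst h) y = snd h).
 assert (HP1 : forall u, conv allR X u -> forall h, In h hs -> dot (fst h) u <= snd h).
 { intros u Hu. apply Hhs in Hu. rewrite Forall_forall in Hu. auto. }
 assert (HP2 : forall u, (forall h, In h hs -> dot (fst h) u <= snd h) -> conv allR X u).
 { intros u Hu. apply Hhs. rewrite Forall_forall. auto. }
 assert (HXP : forall u, X u -> conv allR X u) by (intros; apply X_in_conv; auto; exact I).
 destruct (ys_exist Y (fun h => ~ tight h) y0 hs Hy0) as [m [pts [Hm [HYp Hlt]]]].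
 { intros h Hin Hnt. apply not_all_ex_not in Hnt. destruct Hnt as [y Hy].
   apply imply_to_and in Hy. destruct Hy as [Hy Hne]. exists y. split; auto.
   pose proof (HP1 y (HXP y (HYX y Hy)) h Hin). lra. }
 assert (Hmpos : 0 < INR m) by (apply lt_0_INR; auto).
 set (p := comb m (fun _ => / INR m) pts).
 assert (Hpt : forall h, In h hs -> tight h -> dot (fst h) p = snd h).
 { intros h Hin Ht. unfold p. rewrite dot_comb.
   rewrite (sumn_ext m _ (fun _ => / INR m * snd h)). rewrite sumn_const. field. lra.
   intros i Hi. rewrite Ht; auto. }
 assert (Hpn : forall h, In h hs -> ~ tight h -> dot (fst h) p < snd h).
 { intros h Hin Ht. unfold p. rewrite dot_comb.
   replace (snd h) with (sumn m (fun _ => / INR m * snd h)) at 1.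
   2:{ rewrite sumn_const. field. lra. }
   apply sumn_lt.
   - intros i Hi. apply Rmult_le_compat_l. left; apply Rinv_0_lt_compat; auto.
     apply (HP1 (pts i) (HXP _ (HYX _ (HYp i Hi))) h Hin).
   - destruct (Hlt h Hin Ht) as [i [Hi Hl]]. exists i. split; auto.
     apply Rmult_lt_compat_l; auto. apply Rinv_0_lt_compat; auto. }
 assert (HinvF : F (/ INR m)).
 { apply sf_inv; [exact HF| apply sf_INR; exact HF| lra]. }
 assert (HpF : forall j, F (p j)).
 { intros j. unfold p, comb. apply sf_sumn; [exact HF|]. intros i Hi. apply sf_mul; [exact HF|exact HinvF|].
   apply HXF. apply HYX, HYp; auto. }
 assert (Hpc : conv F Y p).
 { apply conv_iff. exists m, (fun _ => / INR m), pts. split; [|split; auto].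
   - intros i Hi. split. exact HinvF. split; auto.
     left; apply Rinv_0_lt_compat; auto.
   - rewrite sumn_const. field. lra. }
 destruct (N_exist (fun h => ~ tight h) p x hs Hpn) as [N HN].
 set (e := / INR (S N)).
 assert (HSN : 0 < INR (S N)) by (apply lt_0_INR; lia).
 assert (He : 0 < e) by (apply Rinv_0_lt_compat; auto).
 assert (HeF : F e) by (apply sf_inv; [exact HF| apply sf_INR; exact HF| lra]).
 set (q := fun j => (1 + e) * p j + (- e) * x j).
 assert (Hdq : forall a, dot a q = (1 + e) * dot a p + (- e) * dot a x).
 { intros a. unfold q. apply dot_lin. }
 assert (HqP : conv allR X q).
 { apply HP2. intros h Hin. rewrite Hdq. destruct (classic (tight h)) as [Ht|Ht].
   - rewrite Hpt, Hxt; auto. lra.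
   - pose proof (HN h Hin Ht) as H1.
     assert (e * (dot (fst h) p - dot (fst h) x) < snd h - dot (fst h) p).
     { apply Rmult_lt_reg_l with (INR (S N)); auto. unfold e. rewrite <- Rmult_assoc, Rinv_r by lra. lra. }
     lra. }
 assert (HqF : forall j, F (q j)).
 { intros j. unfold q. apply sf_add; auto; apply sf_mul; auto. apply sf_add; auto. apply sf_1; auto.
   apply sf_opp; auto. }
 apply conv_iff in HqP. destruct HqP as [m0 [c0 [pts0 [H0 [Hs0 Hq0]]]]].
 destruct (pos_repr allR X m0 c0 pts0 H0) as [mq [cq [ptsq [Hq1 [Hq2 Hq3]]]]].
 rewrite Hs0 in Hq2. rewrite <- Hq0 in Hq3.
 destruct (reprF F HF n mq cq ptsq q) as [c' [Hc1 [Hc2 Hc3]]]; auto.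
 { intros i Hi; apply Hq1; auto. }
 { intros i Hi j. apply HXF. apply Hq1; auto. }
 set (c'' := scons (e / (1 + e)) (fun i => c' i / (1 + e))).
 set (pts'' := scons x ptsq).
 assert (Hcomb : p = comb (S mq) c'' pts'').
 { apply functional_extensionality; intros j. unfold comb. simpl.
   rewrite (sumn_ext mq _ (fun i => / (1 + e) * (c' i * ptsq i j))).
   rewrite sumn_scal. change (sumn mq (fun i => c' i * ptsq i j)) with (comb mq c' ptsq j).
   rewrite Hc3. unfold q. field. lra. intros; simpl; field; lra. }
 assert (Hrel := relint_lemma F HF n (S mq) c'' pts'').
 destruct HW as [_ HW].
 assert (HU : subsetP (fun u => exists i, (i < S mq)%nat /\ u = pts'' i) Y).
 { apply HW.
   - intros u [[|i] [Hi ->]]; simpl; auto. apply Hq1; lia.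
   - exists p. split; auto. rewrite Hcomb. apply Hrel.
     + intros [|i] Hi; simpl.
       * split. apply sf_div; auto. apply sf_add; auto. apply sf_1; auto. lra.
         apply Rdiv_lt_0_compat; lra.
       * destruct (Hc1 i ltac:(lia)). split. apply sf_div; auto. apply sf_add; auto. apply sf_1; auto. lra.
         apply Rdiv_lt_0_compat; lra.
     + simpl. rewrite (sumn_ext mq _ (fun i => / (1 + e) * c' i)). rewrite sumn_scal, Hc2. field. lra.
       intros; simpl; field; lra. }
 apply (HU x). exists 0%nat. split; auto. lia.
Qed.

Theorem theorem4p4 (F : R -> Prop) (n : nat) (X : Vec n -> Prop) :
  is_subfield F ->
  (forall x, X x -> forall i, F (x i)) ->
  (exists x, X x) ->
  polyhedron (conv allR X) ->
  forall Y : Vec n -> Prop,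
    (exists y, Y y) -> subsetP Y X ->
    (weak_face F X Y <->
       exists Fc, face (conv allR X) Fc /\ forall u, Y u <-> Fc u /\ X u) /\
    (forall Fc, face (conv allR X) Fc -> (forall u, Y u <-> Fc u /\ X u) ->
       forall u, conv allR Y u <-> Fc u).
Proof.
 intros HF HXF _ [hs Hhs] Y [y0 Hy0] HYX. split.
 - split.
   + intros HW.
     set (tight := fun h : Vec n * R => forall y, Y y -> dot (fst h) y = snd h).
     assert (HP1 : forall h, In h hs -> forall u, conv allR X u -> dot (fst h) u <= snd h).
     { intros h Hin u Hu. apply Hhs in Hu. rewrite Forall_forall in Hu. auto. }
     destruct (face_vec (conv allR X) tight y0 hs HP1) as [v Hv].
     { intros h Hin Ht; apply Ht; auto. }
     exists (fun u => conv allR X u /\ forall h, In h hs -> tight h -> dot (fst h) u = snd h).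
     split.
     * right. exists v, y0. split; [|split].
       -- intros u Hu. apply Rle_ge. apply Hv; auto.
       -- exists y0. assert (conv allR X y0) by (apply X_in_conv; auto; exact I).
          split; auto. destruct (Hv y0 H) as [_ Hiff]. apply Hiff. intros h _ Ht; apply Ht; auto.
       -- intros u. split.
          ++ intros [Hu Ht]. split; auto. destruct (Hv u Hu) as [_ Hiff]. apply Hiff; auto.
          ++ intros [Hu Hz]. split; auto. destruct (Hv u Hu) as [_ Hiff]. apply Hiff; auto.
     * intros u. split.
       -- intros Hu. assert (HXu := HYX u Hu). split; [split|exact HXu].
          apply X_in_conv; [exact I|exact HXu]. intros h _ Ht; apply Ht; auto.
       -- intros [[_ Ht] Hx]. apply (hard F n X Y hs y0 u); auto.
   + intros [Fc [Hf HY]]. eapply backward; eauto.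
 - intros Fc Hf HY. apply (moreover n X Y Fc y0); auto.
Qed.
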